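(* The class $\mathbb{ML}^{\Box\Diamond}$, regarded as a class of algebras $(L;\wedge,\vee,\neg,\Box,\Diamond)$, is an equational class (a variety). Concretely, such an algebra belongs to $\mathbb{ML}^{\Box\Diamond}$ if and only if it satisfies the lattice identities, the identities $x\wedge\neg x\preccurlyeq y$, $y\preccurlyeq\neg(x\wedge\neg x)$, $x\wedge\neg(x\wedge y)\preccurlyeq\neg y$, $x\vee\neg\Box x\approx 1$, $\Box 1\approx 1$, $\Box(x\vee\neg y)\wedge y\approx\Box x\wedge y$, and the identities $\neg x\vee\Diamond x\approx 1$, $\Diamond x\preccurlyeq\Diamond(x\vee y)$, $\Diamond\Box x\preccurlyeq x$, where $1$ abbreviates $\neg(x\wedge\neg x)$ and $s\preccurlyeq t$ abbreviates $s\wedge t\approx s$.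
   Context: A meet-complemented lattice is a lattice $(L,\le)$ (not necessarily distributive) such that for every $a\in L$ the element $\neg a=\max\{b\in L: a\wedge b\le c\ \text{for all } c\in L\}$ exists; such a lattice is bounded, with bottom $0$ and top $1$. For $a\in L$, $\Box a=\max\{b\in L: a\vee\neg b=1\}$ and $\Diamond a=\min\{b\in L: \neg a\vee b=1\}$, when these exist. $\mathbb{ML}^{\Box\Diamond}$ is the class of meet-complemented lattices in which both $\Box a$ and $\Diamond a$ exist for every $a$, considered as algebras with operations $\wedge,\vee,\neg,\Box,\Diamond$. *)

(* Defs.v *)
Section Defs.
Context {L : Type} (meet join : L -> L -> L).

Definition lattice_identities : Prop :=
  (forall x y z, meet x (meet y z) = meet (meet x y) z) /\
  (forall x y z, join x (join y z) = join (join x y) z) /\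
  (forall x y, meet x y = meet y x) /\
  (forall x y, join x y = join y x) /\
  (forall x, meet x x = x) /\
  (forall x, join x x = x) /\
  (forall x y, meet x (join x y) = x) /\
  (forall x y, join x (meet x y) = x).

Definition lle (x y : L) : Prop := meet x y = x.

Definition is_max (P : L -> Prop) (a : L) : Prop :=
  P a /\ forall b, P b -> lle b a.
Definition is_min (P : L -> Prop) (a : L) : Prop :=
  P a /\ forall b, P b -> lle a b.

Definition is_top (t : L) : Prop := forall x, lle x t.
End Defs.

(* Membership of the algebra (L; meet, join, neg, box, dia) in ML^{Box Dia}:
   (L, meet, join) is a lattice, neg a is the meet-complement of a, box a is
   max{b : a ∨ ¬b = 1} and dia a is min{b : ¬a ∨ b = 1}. *)
Definition in_MLBoxDia {L : Type} (meet join : L -> L -> L)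
    (neg box dia : L -> L) : Prop :=
  lattice_identities meet join /\
  (forall a, is_max meet (fun b => forall c, lle meet (meet a b) c) (neg a)) /\
  (forall a, is_max meet (fun b => is_top meet (join a (neg b))) (box a)) /\
  (forall a, is_min meet (fun b => is_top meet (join (neg a) b)) (dia a)).

Definition satisfies_MLBoxDia_identities {L : Type} (meet join : L -> L -> L)
    (neg box dia : L -> L) : Prop :=
  let one x := neg (meet x (neg x)) in
  lattice_identities meet join /\
  (forall x y, lle meet (meet x (neg x)) y) /\
  (forall x y, lle meet y (one x)) /\
  (forall x y, lle meet (meet x (neg (meet x y))) (neg y)) /\
  (forall x, join x (neg (box x)) = one x) /\
  (forall x, box (one x) = one x) /\
  (forall x y, meet (box (join x (neg y))) y = meet (box x) y) /\
  (forall x, join (neg x) (dia x) = one x) /\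
  (forall x y, lle meet (dia x) (dia (join x y))) /\
  (forall x, lle meet (dia (box x)) x).

(* Main.v *)
Require Import Defs.

Lemma lat_le_join {L : Type} (m j : L -> L -> L) (H : lattice_identities m j) x y :
  lle m x y <-> j x y = y.
Proof.
  destruct H as (mA & jA & mC & jC & mI & jI & mJ & jM). unfold lle; split; intro E.
  - rewrite <- E, jC, mC. apply jM.
  - rewrite <- E. apply mJ.
Qed.

Lemma lat_trans {L : Type} (m j : L -> L -> L) (H : lattice_identities m j) x y z :
  lle m x y -> lle m y z -> lle m x z.
Proof.
  destruct H as (mA & jA & mC & jC & mI & jI & mJ & jM). unfold lle; intros E1 E2.
  rewrite <- E1, <- mA, E2. reflexivity.
Qed.

Lemma lat_anti {L : Type} (m j : L -> L -> L) (H : lattice_identities m j) x y :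
  lle m x y -> lle m y x -> x = y.
Proof.
  destruct H as (mA & jA & mC & jC & mI & jI & mJ & jM). unfold lle; intros E1 E2.
  rewrite <- E1, mC. exact E2.
Qed.

Lemma lat_refl {L : Type} (m j : L -> L -> L) (H : lattice_identities m j) x : lle m x x.
Proof. destruct H as (mA & jA & mC & jC & mI & jI & mJ & jM). apply mI. Qed.

Lemma lat_ml {L : Type} (m j : L -> L -> L) (H : lattice_identities m j) x y : lle m (m x y) x.
Proof.
  destruct H as (mA & jA & mC & jC & mI & jI & mJ & jM). unfold lle.
  rewrite mC, mA, mI. reflexivity.
Qed.

Lemma lat_mr {L : Type} (m j : L -> L -> L) (H : lattice_identities m j) x y : lle m (m x y) y.
Proof.
  destruct H as (mA & jA & mC & jC & mI & jI & mJ & jM). unfold lle.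
  rewrite <- mA, mI. reflexivity.
Qed.

Lemma lat_glb {L : Type} (m j : L -> L -> L) (H : lattice_identities m j) x y z :
  lle m z x -> lle m z y -> lle m z (m x y).
Proof.
  destruct H as (mA & jA & mC & jC & mI & jI & mJ & jM). unfold lle; intros E1 E2.
  rewrite mA, E1. exact E2.
Qed.

Lemma lat_jl {L : Type} (m j : L -> L -> L) (H : lattice_identities m j) x y : lle m x (j x y).
Proof. destruct H as (mA & jA & mC & jC & mI & jI & mJ & jM). apply mJ. Qed.

Lemma lat_jr {L : Type} (m j : L -> L -> L) (H : lattice_identities m j) x y : lle m y (j x y).
Proof. destruct H as (mA & jA & mC & jC & mI & jI & mJ & jM). unfold lle. rewrite jC. apply mJ. Qed.

Lemma lat_lub {L : Type} (m j : L -> L -> L) (H : lattice_identities m j) x y z :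
  lle m x z -> lle m y z -> lle m (j x y) z.
Proof.
  intros E1 E2. apply (lat_le_join m j H) in E1. apply (lat_le_join m j H) in E2.
  apply (lat_le_join m j H).
  destruct H as (mA & jA & mC & jC & mI & jI & mJ & jM).
  rewrite <- jA, E2. exact E1.
Qed.

Lemma top_uniq {L : Type} (m j : L -> L -> L) (H : lattice_identities m j) s t :
  is_top m s -> is_top m t -> s = t.
Proof. intros A B. apply (lat_anti m j H); [apply B | apply A]. Qed.

Lemma top_up {L : Type} (m j : L -> L -> L) (H : lattice_identities m j) s t :
  is_top m s -> lle m s t -> is_top m t.
Proof. intros A B x. apply (lat_trans m j H) with s; auto. Qed.

Theorem mainTheorem2 (L : Type) (meet join : L -> L -> L) (neg box dia : L -> L) :
  in_MLBoxDia meet join neg box dia <->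
  satisfies_MLBoxDia_identities meet join neg box dia.
Proof.
  split.
  - intros (H & Hn & Hb & Hd).
    pose proof (lat_trans meet join H) as tr.
    pose proof (lat_ml meet join H) as ml.
    pose proof (lat_mr meet join H) as mr.
    pose proof (lat_glb meet join H) as glb.
    pose proof (lat_jl meet join H) as jl.
    pose proof (lat_jr meet join H) as jr.
    pose proof (lat_lub meet join H) as lub.
    assert (bot : forall x y, lle meet (meet x (neg x)) y) by (intro x; apply (proj1 (Hn x))).
    assert (onetop : forall x, is_top meet (neg (meet x (neg x)))).
    { intros x y. apply (proj2 (Hn _)). intro c. apply tr with (meet x (neg x)); auto. }
    assert (antit : forall a b, lle meet a b -> lle meet (neg b) (neg a)).
    { intros a b hab. apply (proj2 (Hn a)). intro c.
      apply tr with (meet b (neg b)); auto. apply glb; eauto. }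
    assert (topeq : forall s x, is_top meet s -> s = neg (meet x (neg x))).
    { intros; apply (top_uniq meet join H); auto. }
    split; [exact H|]. split; [exact bot|]. split; [intros; apply onetop|].
    split.
    { intros x y. apply (proj2 (Hn y)). intro c.
      apply tr with (meet (meet x y) (neg (meet x y))); auto.
      apply glb; [apply glb; [apply tr with (meet x (neg (meet x y))); auto | auto] | apply tr with (meet x (neg (meet x y))); auto]. }
    split. { intros x. apply topeq. apply (proj1 (Hb x)). }
    split.
    { intros x. set (o := neg (meet x (neg x))). apply (lat_anti meet join H).
      - apply onetop.
      - apply (proj2 (Hb o)). apply (top_up meet join H) with o; [apply onetop | auto]. }
    split.
    { intros x y. apply (lat_anti meet join H).
      - apply glb; auto. apply tr with (meet (box (join x (neg y))) y); auto.
        apply (proj2 (Hb x)). apply (top_up meet join H) with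
          (join (join x (neg y)) (neg (box (join x (neg y))))).
        + apply (proj1 (Hb _)).
        + apply lub; [apply lub|].
          * auto.
          * apply tr with (neg (meet (box (join x (neg y))) y)); auto.
          * apply tr with (neg (meet (box (join x (neg y))) y)); auto.
      - apply glb; auto. apply tr with (meet (box x) y); auto.
        apply (proj2 (Hb _)). apply (top_up meet join H) with (join x (neg (box x))).
        + apply (proj1 (Hb _)).
        + apply lub.
          * apply tr with (join x (neg y)); auto.
          * apply tr with (neg (meet (box x) y)); auto. }
    split. { intros x. apply topeq. apply (proj1 (Hd x)). }
    split.
    { intros x y. apply (proj2 (Hd x)).
      apply (top_up meet join H) with (join (neg (join x y)) (dia (join x y))).
      + apply (proj1 (Hd _)).
      + apply lub; auto. apply tr with (neg x); auto. }
    { intros x. apply (proj2 (Hd _)).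
      apply (top_up meet join H) with (join x (neg (box x))).
      + apply (proj1 (Hb _)).
      + apply lub; auto. }
  - intros (H & bot & onetop & h4 & h5 & h6 & h7 & h8 & h9 & h10).
    pose proof (lat_trans meet join H) as tr.
    pose proof (lat_ml meet join H) as ml.
    pose proof (lat_mr meet join H) as mr.
    pose proof (lat_glb meet join H) as glb.
    pose proof (lat_jl meet join H) as jl.
    pose proof (lat_jr meet join H) as jr.
    pose proof (lat_lub meet join H) as lub.
    assert (istop : forall x, is_top meet (neg (meet x (neg x)))) by (intros x y; apply onetop).
    assert (negbot : forall z, (forall c, lle meet z c) -> is_top meet (neg z)).
    { intros z hz. assert (z = meet z (neg z)) as E.
      { apply (lat_anti meet join H); auto. }
      replace (neg z) with (neg (meet z (neg z))) by (rewrite <- E; reflexivity). apply istop. }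
    assert (boxmax : forall a b, is_top meet (join a (neg b)) -> lle meet b (box a)).
    { intros a b T. pose proof (h7 a b) as E.
      assert (join a (neg b) = neg (meet a (neg a))) as E2 by
        (apply (top_uniq meet join H); auto).
      rewrite E2, h6 in E.
      assert (meet (neg (meet a (neg a))) b = b) as E3.
      { apply (lat_anti meet join H); [apply mr|]. apply glb; [apply istop | apply (lat_refl meet join H)]. }
      rewrite E3 in E. apply tr with (meet (box a) b); [|apply ml].
      rewrite <- E. apply (lat_refl meet join H). }
    split; [exact H|]. split; [|split].
    + intros a. split; [apply bot|]. intros b hb.
      apply tr with (meet b (neg (meet b a))).
      * apply glb; [apply lat_refl with join; auto|]. apply negbot. intro c.
        replace (meet b a) with (meet a b) by (destruct H as (mA & jA & mC & jC & _); apply mC). auto.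
      * auto.
    + intros a. split.
      * rewrite h5. apply istop.
      * intros b hb. auto.
    + intros a. split.
      * rewrite h8. apply istop.
      * intros b hb. apply tr with (dia (box b)); auto.
        assert (lle meet a (box b)) as hab.
        { apply boxmax.
          replace (join b (neg a)) with (join (neg a) b) by (destruct H as (mA & jA & mC & jC & _); apply jC). exact hb. }
        apply (lat_le_join meet join H) in hab. rewrite <- hab. auto.
Qed.
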